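(* Let $R>0$ and $f$ be as defined below. For all $d\ge0$ and $r\ge R$, $$f(d,r)\le f_\sqcap(d,r):=\frac2R\mathbb{1}_{[d-R,d+R]}(r),$$ $$f(d,r)\ge f_\wedge(d,r):=\frac{2(R-d+r)}{\pi R^2}\mathbb{1}_{(d-R,d)}(r)+\frac{2(d+R-r)}{\pi R^2}\mathbb{1}_{[d,d+R)}(r).$$
   Context: For $d\ge0$, $r\ge0$: $f(d,r)=2r/R^2$ if $r\le R-d$; $f(d,r)=0$ if $r>R+d$ or $r<d-R$; and $f(d,r)=\frac{2r}{\pi R^2}\arccos\big(\frac{d^2+r^2-R^2}{2dr}\big)$ otherwise. (This is the $r$-derivative of $|B_r(0)\cap B_R(\mathbf{y})|/(\pi R^2)$ with $|\mathbf{y}|=d$.) *)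

(* Defs.v *)
From Stdlib Require Import Reals.
Open Scope R_scope.

Definition fdr (Rad d r : R) : R :=
  if Rle_dec r (Rad - d) then 2 * r / Rad ^ 2
  else if Rlt_dec (Rad + d) r then 0
  else if Rlt_dec r (d - Rad) then 0
  else 2 * r / (PI * Rad ^ 2) * acos ((d ^ 2 + r ^ 2 - Rad ^ 2) / (2 * d * r)).

Definition ind_cc (a b x : R) : R :=
  if Rle_dec a x then (if Rle_dec x b then 1 else 0) else 0.
Definition ind_oo (a b x : R) : R :=
  if Rlt_dec a x then (if Rlt_dec x b then 1 else 0) else 0.
Definition ind_co (a b x : R) : R :=
  if Rle_dec a x then (if Rlt_dec x b then 1 else 0) else 0.

Definition f_cap (Rad d r : R) : R := 2 / Rad * ind_cc (d - Rad) (d + Rad) r.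

Definition f_wedge (Rad d r : R) : R :=
  2 * (Rad - d + r) / (PI * Rad ^ 2) * ind_oo (d - Rad) d r
  + 2 * (d + Rad - r) / (PI * Rad ^ 2) * ind_co d (d + Rad) r.

(* Main.v *)
Require Import Defs.
From Stdlib Require Import Reals Lra Psatz.
Open Scope R_scope.
Lemma cos_lb2 (a : R) : 0 <= a <= 1 -> 1 - a^2/2 <= cos a.
Proof.
  intros Ha. assert (H := cos_bound a 0 ltac:(pose proof PI2_3_2; lra) ltac:(pose proof PI2_3_2; lra)).
  destruct H as [H _]. unfold cos_approx, cos_term in H. simpl in H.
  eapply Rle_trans; [|exact H]. right. field.
Qed.

Lemma sin_lb3 (a : R) : 0 <= a <= 2 -> a / 3 <= sin a.
Proof.
  intros Ha. pose proof PI2_3_2 as Hpi.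
  assert (H := SIN a ltac:(lra) ltac:(lra)). destruct H as [H _].
  unfold sin_lb, sin_approx, sin_term in H. simpl in H.
  eapply Rle_trans; [|exact H].
  assert (0 <= a^2) by nra. assert (a^2 <= 4) by nra.
  assert (0 <= a^4 * (42 - a^2)) by (apply Rmult_le_pos; nra).
  assert (0 <= a * (2/3 - a^2/6)) by (apply Rmult_le_pos; nra).
  assert (0 <= a * (a^4 * (42 - a^2))) by (apply Rmult_le_pos; nra).
  simpl in *. field_simplify. nra.
Qed.
Lemma key (Rad d r : R) : 0 < Rad -> 0 <= d -> Rad <= r -> Rad - d < r -> r <= Rad + d -> d - Rad <= r ->
  let th := acos ((d^2+r^2-Rad^2)/(2*d*r)) in
  0 <= th /\ r * th <= 3 * Rad /\ (d <= r -> Rad - (r - d) <= r * th)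
  /\ (r < d -> Rad - (d - r) <= r * th).
Proof.
  intros hR hd hr h1 h2 h3; cbv zeta.
  assert (hd' : 0 < d) by lra.
  assert (hr' : 0 < r) by lra.
  set (N := d^2+r^2-Rad^2).
  set (x := N / (2*d*r)).
  assert (hx : x * (2*d*r) = N) by (unfold x; field; lra).
  assert (hN0 : 0 <= N) by (unfold N; nra).
  assert (hN1 : N <= 2*d*r).
  { unfold N. assert ((d-r)^2 <= Rad^2).
    { destruct (Rle_dec d r). nra. nra. }
    nra. }
  assert (hdr : 0 < 2*d*r) by nra.
  assert (hx0 : 0 <= x) by (unfold x; apply Rmult_le_pos; [lra| left; apply Rinv_0_lt_compat; lra]).
  assert (hx1 : x <= 1).
  { unfold x. apply (Rmult_le_reg_r (2*d*r)); [lra|]. field_simplify; [|lra]. lra. }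
  assert (hc : cos (acos x) = x) by (apply cos_acos; lra).
  pose proof (acos_bound x) as hb.
  assert (hs : sin (acos x) = sqrt (1 - x²)) by (apply sin_acos; lra).
  remember (acos x) as th eqn:Hth. clearbody x.
  pose proof PI2_3_2 as Hpi.
  split; [lra|].
  split.
  - assert (hth2 : th <= PI/2).
    { apply cos_decr_0; try lra. rewrite cos_PI2. lra. }
    assert (hsq : r^2 * (1 - x^2) <= Rad^2).
    { assert (4*d^2*(r^2*(1-x^2)) <= 4*d^2*Rad^2).
      { replace (4*d^2*(r^2*(1-x^2))) with (4*d^2*r^2 - (x*(2*d*r))^2) by ring.
        rewrite hx. unfold N.
        assert (0 <= (d^2+Rad^2-r^2)^2) by (apply pow2_ge_0).
        assert (E : 4*d^2*Rad^2 - (4*d^2*r^2 - (d^2+r^2-Rad^2)^2) = (d^2+Rad^2-r^2)^2) by ring.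
        lra. }
      apply (Rmult_le_reg_l (4*d^2)); [nra|]. lra. }
    assert (hs2 : sin th <= Rad / r).
    { rewrite hs. rewrite <- (sqrt_pow2 (Rad/r)) by (apply Rmult_le_pos; [lra| left; apply Rinv_0_lt_compat; lra]).
      apply sqrt_le_1_alt. unfold Rsqr.
      apply (Rmult_le_reg_r (r^2)); [nra|].
      replace ((Rad / r) ^ 2 * r^2) with (Rad^2) by (field; lra).
      replace ((1 - x*x) * r^2) with (r^2*(1-x^2)) by ring. lra. }
    pose proof PI_4. pose proof (sin_lb3 th ltac:(lra)).
    assert (th <= 3 * (Rad / r)) by lra.
    assert (r * th <= r * (3 * (Rad / r))) by (apply Rmult_le_compat_l; lra).
    replace (r * (3 * (Rad / r))) with (3*Rad) in * by (field; lra). lra.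
  - assert (gen : forall a, 0 <= a <= Rad ->
        r * N <= 2*d*r^2 - d*(Rad-a)^2 -> Rad - a <= r * th).
    { intros a ha hg. set (y := (Rad - a)/r).
      assert (hy : y * r = Rad - a) by (unfold y; field; lra).
      assert (hy0 : 0 <= y) by (unfold y; apply Rmult_le_pos; [lra| left; apply Rinv_0_lt_compat; lra]).
      assert (hy1 : y <= 1).
      { apply (Rmult_le_reg_r r); [lra|]. lra. }
      assert (hxy : x <= 1 - y^2/2).
      { apply (Rmult_le_reg_r (2*d*r^2)); [nra|].
        replace (x * (2*d*r^2)) with (r * N) by (transitivity (r*(x*(2*d*r))); [rewrite hx; reflexivity | ring]).
        replace ((1 - y^2/2) * (2*d*r^2)) with (2*d*r^2 - d*(y*r)^2) by field.
        rewrite hy. lra. }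
      pose proof (cos_lb2 y ltac:(lra)).
      assert (y <= th). { apply cos_decr_0; try lra. }
      nra. }
    split; intros hh.
    + apply (gen (r - d)). lra. unfold N.
      assert (0 <= (r-d) * ((Rad - (r-d)) * (r-d+Rad+2*d))).
      { apply Rmult_le_pos; [lra|]. apply Rmult_le_pos; lra. }
      nra.
    + apply (gen (d - r)). lra. unfold N.
      assert (0 <= (d-r) * ((Rad - (d-r)) * (2*r - Rad + (d-r)))).
      { apply Rmult_le_pos; [lra|]. apply Rmult_le_pos; lra. }
      nra.
Qed.

Theorem lemma4p8 (Rad : R) (hR : 0 < Rad) :
  forall d r : R, 0 <= d -> Rad <= r ->
    fdr Rad d r <= f_cap Rad d r /\ f_wedge Rad d r <= fdr Rad d r.
Proof.
  intros d r hd hr.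
  pose proof PI2_3_2 as Hpi.
  assert (hc : 0 < 2 / (PI * Rad^2)).
  { apply Rdiv_lt_0_compat; [lra|]. apply Rmult_lt_0_compat; [lra|]. nra. }
  unfold fdr, f_cap, f_wedge, ind_cc, ind_oo, ind_co.
  destruct (Rle_dec r (Rad - d)) as [c1|c1].
  { assert (r = Rad) by lra. assert (d = 0) by lra. subst.
    replace (2 * Rad / Rad^2) with (2/Rad) by (field; lra).
    assert (0 < 2/Rad) by (apply Rdiv_lt_0_compat; lra).
    repeat destruct Rle_dec; repeat destruct Rlt_dec; try lra. }
  destruct (Rlt_dec (Rad + d) r) as [c2|c2].
  { assert (0 < 2/Rad) by (apply Rdiv_lt_0_compat; lra).
    repeat destruct Rle_dec; repeat destruct Rlt_dec; try lra. }
  destruct (Rlt_dec r (d - Rad)) as [c3|c3].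
  { repeat destruct Rle_dec; repeat destruct Rlt_dec; try lra. }
  destruct (key Rad d r hR hd hr ltac:(lra) ltac:(lra) ltac:(lra)) as [k0 [k1 [k2 k3]]].
  set (th := acos _) in *.
  set (c := 2 / (PI * Rad^2)) in *.
  replace (2 * r / (PI * Rad ^ 2) * th) with (c * (r * th)) by (unfold c; field; lra).
  replace (2 * (Rad - d + r) / (PI * Rad ^ 2)) with (c * (Rad - d + r)) by (unfold c; field; lra).
  replace (2 * (d + Rad - r) / (PI * Rad ^ 2)) with (c * (d + Rad - r)) by (unfold c; field; lra).
  assert (hcap : c * (r * th) <= 2 / Rad).
  { apply Rle_trans with (c * (3 * Rad)).
    apply Rmult_le_compat_l; lra.
    unfold c. apply (Rmult_le_reg_r (PI * Rad)). nra.
    replace (2 / (PI * Rad ^ 2) * (3 * Rad) * (PI * Rad)) with 6 by (field; lra).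
    replace (2 / Rad * (PI * Rad)) with (2 * PI) by (field; lra). lra. }
  assert (0 <= c * (r * th)) by (apply Rmult_le_pos; nra).
  split.
  - repeat destruct Rle_dec; try lra.
  - repeat destruct Rle_dec; repeat destruct Rlt_dec; try lra.
    all: try (assert (c * (Rad - d + r) <= c * (r * th)) by (apply Rmult_le_compat_l; [lra|]; specialize (k3 ltac:(lra)); lra); lra).
    all: try (assert (c * (d + Rad - r) <= c * (r * th)) by (apply Rmult_le_compat_l; [lra|]; specialize (k2 ltac:(lra)); lra); lra).
Qed.
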